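(* Let $g(x) = (x^{17}+1)^6 \in \mathbb{F}_{2}[x] \subseteq \mathbb{F}_{256}[x]$ and let $L = \{\alpha_1,\ldots,\alpha_n\}$ be the set of all elements $\alpha \in \mathbb{F}_{256}$ with $g(\alpha) \neq 0$, listed in some order (so $n = 239$). Then the binary Goppa code $C(L,g)$ is a $[239, 21, 103]$ binary linear code, i.e. it has length $239$, dimension $21$ over $\mathbb{F}_2$, and minimum distance $103$.
   Context: For a subset $L=\{\alpha_1,\ldots,\alpha_n\}$ of $\mathbb{F}_{2^m}$ and a polynomial $g(x)\in\mathbb{F}_{2^m}[x]$ with $g(\alpha_i)\neq 0$ for all $i$, the binary Goppa code is $C(L,g) = \{(c_1,\ldots,c_n)\in\mathbb{F}_2^n : \sum_{i=1}^n \frac{c_i}{x-\alpha_i} \equiv 0 \pmod{g(x)}\}$, where $\frac{1}{x-\alpha_i}$ denotes the inverse of $x-\alpha_i$ modulo $g(x)$. A $[n,k,d]$ binary linear code is a $k$-dimensional subspace of $\mathbb{F}_2^n$ whose minimum nonzero Hamming weight is $d$. Here $\mathbb{F}_{256}=\mathbb{F}_{2^8}$. *)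

(* Defs.v *)
From HB Require Import structures.
From mathcomp Require Import all_boot all_order all_algebra.
Set Implicit Arguments. Unset Strict Implicit. Unset Printing Implicit Defensive.
Import GRing.Theory.
Local Open Scope ring_scope.

Definition inv_mod (F : fieldType) (g : {poly F}) (a : F) (h : {poly F}) : Prop :=
  (('X - a%:P) * h) %% g = 1.

(* Membership in the binary Goppa code C(L,g): c in F_2^n with
   sum_i c_i/(x - alpha_i) = 0 mod g, where 1/(x-alpha_i) is (any, hence
   the unique up to mod g) inverse of x - alpha_i modulo g. *)
Definition in_goppa (F : fieldType) (n : nat) (L : 'I_n -> F) (g : {poly F})
  (c : 'rV['F_2]_n) : Prop :=
  forall h : 'I_n -> {poly F}, (forall i, inv_mod g (L i) (h i)) ->
    g %| \sum_(i < n) ((c 0 i : nat)%:R : F) *: h i.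

Definition hweight (n : nat) (c : 'rV['F_2]_n) : nat := #|[set i | c 0 i != 0]|.

Definition is_nkd_code (n k d : nat) (C : 'rV['F_2]_n -> Prop) : Prop :=
  (exists G : 'M['F_2]_(k, n), row_free G /\ forall c, C c <-> (c <= G)%MS) /\
  (exists c, C c /\ c != 0 /\ hweight c = d) /\
  (forall c, C c -> c != 0 -> (d <= hweight c)%N).

(* Main.v *)
Require Import Defs.
From Stdlib Require Import NArith.
From HB Require Import structures.
From mathcomp Require Import all_boot all_order all_algebra all_field ring zify.
Set Implicit Arguments. Unset Strict Implicit. Unset Printing Implicit Defensive.

(* Proof strategy: F is identified with bytes via a root r of x^8+x^4+x^3+x+1;
   the Goppa code is characterized by explicit parity checks computed with
   vm_compute; minimum distance lower bound is the classical Goppa bound. *)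

Definition byte := (bool * bool * bool * bool * bool * bool * bool * bool)%type.
Definition bzero : byte := (false,false,false,false,false,false,false,false).
Definition bone : byte := (true,false,false,false,false,false,false,false).
Definition bxor (x y : byte) : byte :=
  let: (a0,a1,a2,a3,a4,a5,a6,a7) := x in let: (c0,c1,c2,c3,c4,c5,c6,c7) := y in
  (addb a0 c0, addb a1 c1, addb a2 c2, addb a3 c3, addb a4 c4, addb a5 c5, addb a6 c6, addb a7 c7).
Definition band (x y : byte) : byte :=
  let: (a0,a1,a2,a3,a4,a5,a6,a7) := x in let: (c0,c1,c2,c3,c4,c5,c6,c7) := y in
  (a0 && c0, a1 && c1, a2 && c2, a3 && c3, a4 && c4, a5 && c5, a6 && c6, a7 && c7).
Definition bpar (x : byte) : bool :=
  let: (a0,a1,a2,a3,a4,a5,a6,a7) := x in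
  addb a0 (addb a1 (addb a2 (addb a3 (addb a4 (addb a5 (addb a6 a7)))))).
Definition xtime (x : byte) : byte :=
  let: (a0,a1,a2,a3,a4,a5,a6,a7) := x in
  (a7, addb a0 a7, a1, addb a2 a7, addb a3 a7, a4, a5, a6).
Definition hstep (x : byte) (b : bool) (acc : byte) : byte :=
  bxor (xtime acc) (if b then x else bzero).
Definition gmul (x y : byte) : byte :=
  let: (b0,b1,b2,b3,b4,b5,b6,b7) := y in
  hstep x b0 (hstep x b1 (hstep x b2 (hstep x b3 (hstep x b4 (hstep x b5 (hstep x b6 (hstep x b7 bzero))))))).
Definition gpow (x : byte) (n : nat) : byte := iter n (gmul x) bone.
Definition ginv (x : byte) : byte := gpow x 254.
Definition geval (b : byte) : byte :=
  bxor (gpow b 102) (bxor (gpow b 68) (bxor (gpow b 34) bone)).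
Definition qb (k : nat) (b : byte) : byte :=
  bxor (gpow b (101 - k)) (bxor (if k < 68 then gpow b (67 - k) else bzero)
                                (if k < 34 then gpow b (33 - k) else bzero)).
Definition colb (k : nat) (b : byte) : byte := gmul (qb k b) (ginv (geval b)).

Definition colvec (b : byte) : seq byte :=
  let pw := traject (gmul b) bone 103 in
  let p := fun e => nth bzero pw e in
  let iv := ginv (bxor (p 102) (bxor (p 68) (bxor (p 34) bone))) in
  [seq gmul (bxor (p (101 - k)) (bxor (if k < 68 then p (67 - k) else bzero)
                                (if k < 34 then p (33 - k) else bzero))) iv | k <- iota 0 102].

Definition vxor (u v : seq byte) : seq byte := [seq bxor p.1 p.2 | p <- zip u v].
Definition zv : seq byte := nseq 102 bzero.
Definition synd (s : seq byte) : seq byte := foldr (fun b acc => vxor (colvec b) acc) zv s.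
Definition dotl (m v : seq byte) : bool :=
  foldr addb false [seq bpar (band p.1 p.2) | p <- zip m v].

Definition byte_of_N (n : N) : byte :=
  (N.testbit n 0, N.testbit n 1, N.testbit n 2, N.testbit n 3,
   N.testbit n 4, N.testbit n 5, N.testbit n 6, N.testbit n 7).
Definition all_bytes : seq byte := [seq byte_of_N (N.of_nat i) | i <- iota 0 256].

Definition Aseq : seq byte := [seq b <- all_bytes | geval b != bzero].

Local Open Scope N_scope.
Definition pivN : seq N := [:: 229; 234; 235; 237; 238; 240; 241; 242; 243; 244; 245; 246; 247; 248; 249; 250; 251; 252; 253; 254; 255].
Definition basisN : seq (seq N) := [:: [:: 3; 4; 7; 11; 12; 18; 19; 21; 23; 24; 25; 26; 27; 28; 30; 31; 32; 35; 36; 37; 38; 40; 41; 42; 43; 44; 45; 46; 48; 49; 51; 55; 58; 60; 61; 63; 65; 69; 71; 72; 75; 76; 78; 80; 83; 85; 86; 87; 88; 90; 91; 92; 94; 95; 103; 110; 112; 117; 119; 120; 122; 126; 127; 128; 129; 131; 135; 141; 142; 144; 145; 147; 148; 149; 150; 151; 152; 154; 158; 160; 161; 163; 164; 165; 167; 169; 170; 174; 176; 181; 186; 187; 188; 195; 197; 198; 199; 201; 202; 204; 205; 206; 207; 208; 214; 218; 219; 220; 224; 226; 227; 229];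
 [:: 0; 2; 6; 7; 9; 12; 16; 17; 18; 19; 20; 22; 25; 26; 28; 30; 34; 35; 36; 38; 39; 41; 44; 48; 50; 51; 52; 56; 59; 61; 63; 65; 66; 69; 70; 79; 80; 83; 87; 92; 93; 94; 100; 101; 103; 104; 108; 110; 113; 114; 116; 117; 118; 119; 121; 123; 124; 125; 127; 130; 132; 134; 135; 138; 140; 142; 144; 146; 148; 150; 153; 159; 160; 163; 166; 167; 168; 169; 172; 173; 177; 178; 180; 182; 183; 185; 186; 187; 188; 193; 195; 200; 201; 202; 203; 204; 205; 207; 208; 209; 212; 213; 218; 219; 221; 223; 225; 226; 227; 228; 231; 234];
 [:: 5; 6; 7; 10; 13; 15; 16; 18; 19; 20; 21; 22; 24; 26; 27; 30; 32; 34; 35; 37; 38; 40; 43; 44; 45; 49; 50; 55; 56; 61; 62; 63; 66; 72; 76; 77; 79; 81; 82; 83; 85; 88; 89; 92; 93; 94; 95; 96; 98; 101; 104; 106; 108; 109; 111; 115; 117; 119; 120; 121; 123; 127; 130; 132; 135; 136; 137; 138; 139; 140; 142; 143; 147; 148; 149; 151; 152; 153; 155; 160; 161; 163; 164; 165; 166; 168; 170; 176; 180; 184; 185; 186; 188; 190; 191; 193; 196; 197; 198; 199; 201; 204; 207; 210; 213; 220; 221; 223; 224; 225; 231; 235];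
 [:: 0; 2; 6; 15; 16; 18; 19; 20; 22; 23; 25; 27; 33; 34; 36; 38; 40; 41; 43; 44; 45; 46; 51; 56; 58; 60; 61; 62; 63; 65; 66; 67; 68; 69; 70; 71; 75; 77; 79; 80; 81; 82; 85; 87; 88; 91; 93; 95; 100; 103; 104; 105; 106; 108; 109; 112; 115; 116; 117; 118; 123; 126; 128; 129; 131; 132; 133; 134; 136; 137; 138; 141; 142; 144; 147; 148; 149; 152; 157; 159; 161; 162; 164; 165; 166; 170; 172; 173; 174; 176; 177; 178; 182; 185; 186; 187; 190; 191; 196; 198; 199; 202; 203; 205; 206; 208; 209; 210; 213; 214; 215; 217; 220; 221; 222; 226; 227; 228; 236; 237];
 [:: 2; 3; 4; 5; 6; 7; 13; 15; 16; 17; 21; 24; 25; 27; 33; 34; 35; 38; 39; 46; 49; 50; 51; 52; 55; 58; 61; 62; 69; 70; 72; 76; 78; 79; 81; 82; 84; 85; 86; 88; 92; 93; 100; 101; 103; 105; 107; 109; 117; 118; 119; 121; 122; 124; 130; 132; 133; 138; 139; 140; 143; 145; 146; 147; 154; 156; 158; 161; 162; 163; 164; 165; 167; 169; 170; 172; 173; 174; 175; 176; 180; 183; 184; 185; 186; 188; 190; 192; 197; 198; 199; 200; 201; 202; 203; 204; 205; 206; 207; 208; 212; 213; 214; 217; 219; 222; 223; 224; 225; 226; 233; 238];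
 [:: 2; 10; 11; 13; 14; 16; 18; 19; 20; 22; 25; 26; 31; 34; 36; 37; 38; 39; 44; 46; 48; 51; 52; 55; 56; 58; 61; 67; 69; 70; 76; 79; 81; 82; 83; 84; 85; 86; 87; 88; 90; 92; 93; 94; 96; 100; 101; 104; 106; 107; 109; 110; 111; 112; 117; 120; 121; 122; 124; 128; 129; 132; 133; 134; 135; 137; 142; 143; 144; 149; 151; 154; 155; 160; 163; 166; 167; 168; 169; 172; 174; 175; 177; 178; 181; 184; 185; 190; 192; 196; 197; 198; 199; 201; 205; 206; 207; 208; 209; 213; 216; 219; 221; 224; 225; 227; 228; 230; 231; 233; 236; 240];
 [:: 0; 4; 5; 14; 18; 19; 20; 23; 27; 28; 32; 34; 37; 39; 40; 41; 42; 44; 45; 48; 50; 52; 55; 60; 61; 62; 63; 65; 70; 71; 72; 73; 75; 76; 77; 78; 79; 80; 83; 84; 86; 89; 90; 93; 94; 96; 100; 101; 104; 105; 109; 111; 113; 114; 119; 120; 121; 123; 125; 126; 127; 132; 134; 135; 138; 140; 143; 145; 146; 149; 150; 153; 154; 157; 159; 160; 165; 167; 168; 173; 180; 182; 184; 185; 189; 190; 191; 196; 198; 201; 202; 205; 206; 209; 213; 214; 216; 221; 222; 225; 226; 231; 241];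
 [:: 3; 4; 5; 6; 9; 10; 12; 13; 15; 17; 19; 21; 22; 26; 28; 32; 34; 38; 39; 40; 41; 42; 43; 44; 46; 49; 50; 55; 56; 58; 61; 62; 63; 67; 69; 70; 73; 77; 79; 80; 81; 83; 86; 88; 89; 91; 92; 93; 94; 96; 101; 103; 105; 108; 110; 111; 113; 114; 115; 116; 117; 119; 120; 121; 122; 124; 125; 126; 127; 128; 129; 131; 132; 135; 137; 142; 143; 146; 150; 153; 155; 156; 158; 159; 160; 161; 162; 165; 166; 167; 168; 175; 177; 180; 182; 188; 189; 191; 192; 193; 195; 196; 197; 198; 199; 201; 202; 203; 205; 206; 208; 210; 214; 217; 218; 219; 223; 228; 236; 242];
 [:: 0; 2; 3; 9; 13; 18; 21; 24; 26; 31; 33; 34; 37; 38; 39; 40; 42; 44; 46; 49; 50; 52; 55; 56; 61; 62; 63; 65; 66; 67; 68; 70; 73; 78; 79; 84; 85; 88; 91; 92; 97; 98; 101; 104; 105; 109; 110; 112; 115; 116; 120; 122; 124; 125; 128; 129; 130; 134; 135; 137; 138; 140; 142; 143; 145; 146; 147; 150; 151; 157; 160; 161; 162; 163; 165; 168; 169; 170; 173; 174; 182; 186; 191; 192; 197; 198; 200; 203; 207; 208; 209; 210; 214; 217; 221; 222; 224; 228; 230; 231; 233; 236; 243];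
 [:: 0; 3; 5; 12; 14; 23; 26; 30; 33; 35; 36; 39; 42; 44; 45; 46; 49; 50; 55; 58; 59; 65; 67; 68; 69; 70; 71; 72; 73; 75; 76; 78; 79; 82; 83; 84; 92; 95; 96; 97; 98; 103; 104; 107; 109; 112; 113; 114; 121; 122; 123; 126; 128; 130; 132; 135; 136; 137; 138; 140; 143; 144; 145; 146; 148; 149; 154; 155; 156; 160; 164; 165; 172; 173; 175; 176; 178; 184; 185; 188; 190; 191; 192; 193; 196; 199; 200; 201; 203; 204; 205; 206; 207; 209; 212; 215; 216; 217; 218; 219; 222; 228; 236; 244];
 [:: 2; 5; 6; 7; 10; 11; 13; 15; 16; 17; 18; 19; 21; 24; 27; 30; 33; 38; 39; 41; 43; 44; 45; 46; 48; 49; 51; 60; 63; 65; 67; 69; 71; 72; 73; 76; 81; 82; 84; 86; 87; 92; 97; 98; 100; 103; 104; 105; 107; 114; 116; 118; 120; 121; 123; 124; 125; 127; 128; 129; 131; 134; 135; 136; 137; 138; 139; 140; 141; 143; 144; 145; 146; 148; 149; 152; 153; 154; 156; 158; 160; 166; 168; 170; 172; 175; 176; 180; 181; 185; 186; 187; 188; 189; 190; 192; 193; 197; 200; 201; 202; 203; 204; 206; 207; 208; 210; 212; 214; 215; 216; 217; 220; 221; 226; 227; 231; 236; 245];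
 [:: 3; 4; 5; 10; 11; 12; 14; 15; 16; 17; 18; 19; 20; 22; 23; 24; 32; 34; 35; 39; 40; 41; 42; 50; 51; 55; 58; 59; 60; 65; 66; 67; 68; 69; 70; 72; 73; 79; 81; 82; 83; 84; 85; 86; 87; 90; 92; 96; 100; 103; 104; 105; 106; 107; 109; 110; 113; 114; 122; 123; 124; 126; 127; 131; 132; 134; 135; 140; 141; 142; 143; 145; 146; 149; 150; 151; 158; 160; 161; 162; 165; 166; 168; 169; 170; 174; 176; 177; 178; 180; 182; 183; 185; 187; 188; 189; 190; 193; 195; 196; 197; 200; 202; 203; 204; 205; 206; 207; 210; 212; 213; 214; 215; 222; 223; 224; 226; 227; 228; 246];
 [:: 0; 2; 3; 9; 12; 13; 15; 17; 25; 26; 30; 31; 32; 35; 36; 39; 40; 41; 44; 45; 46; 48; 50; 51; 55; 56; 58; 61; 62; 65; 69; 70; 72; 73; 75; 77; 79; 80; 81; 84; 86; 90; 93; 94; 96; 101; 103; 104; 105; 107; 108; 111; 113; 114; 122; 123; 125; 127; 128; 130; 131; 132; 133; 135; 137; 138; 139; 142; 145; 147; 148; 149; 151; 152; 153; 154; 155; 157; 161; 163; 165; 166; 167; 169; 170; 172; 174; 183; 185; 187; 188; 189; 190; 191; 197; 199; 201; 202; 205; 206; 207; 212; 216; 218; 219; 223; 225; 227; 230; 233; 247];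
 [:: 3; 5; 12; 13; 15; 17; 21; 22; 24; 25; 28; 30; 32; 33; 34; 36; 38; 40; 45; 46; 48; 49; 50; 51; 55; 56; 60; 65; 66; 68; 77; 79; 83; 84; 86; 88; 90; 95; 97; 100; 101; 105; 106; 109; 110; 111; 113; 114; 116; 120; 122; 124; 127; 128; 132; 134; 135; 139; 145; 149; 151; 152; 153; 155; 157; 158; 159; 162; 164; 166; 167; 168; 169; 170; 173; 174; 175; 176; 180; 181; 182; 184; 185; 188; 191; 200; 206; 208; 209; 210; 212; 213; 215; 216; 217; 220; 223; 224; 227; 228; 231; 233; 248];
 [:: 2; 3; 6; 9; 13; 14; 16; 18; 19; 20; 23; 24; 25; 27; 28; 30; 32; 37; 38; 39; 42; 44; 46; 48; 49; 52; 55; 56; 59; 61; 62; 66; 69; 73; 75; 76; 77; 79; 80; 82; 84; 85; 86; 87; 88; 89; 90; 92; 93; 98; 106; 108; 109; 110; 111; 114; 115; 116; 118; 119; 121; 122; 126; 127; 128; 129; 130; 131; 132; 135; 136; 139; 140; 143; 145; 148; 149; 150; 151; 153; 156; 157; 158; 160; 163; 165; 166; 168; 172; 173; 182; 185; 187; 189; 193; 195; 197; 199; 201; 202; 203; 205; 206; 207; 212; 213; 215; 216; 217; 218; 219; 221; 222; 223; 224; 225; 227; 230; 236; 249];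
 [:: 0; 2; 4; 5; 6; 11; 13; 18; 19; 20; 21; 23; 24; 25; 26; 27; 32; 35; 36; 39; 42; 43; 46; 49; 50; 56; 60; 62; 63; 68; 69; 73; 76; 81; 83; 85; 87; 88; 89; 90; 93; 94; 95; 98; 103; 105; 110; 111; 114; 116; 117; 118; 121; 122; 123; 124; 129; 130; 131; 134; 135; 137; 138; 139; 141; 143; 144; 148; 149; 153; 154; 155; 156; 159; 161; 162; 163; 165; 166; 167; 170; 172; 174; 175; 180; 181; 182; 183; 186; 187; 191; 193; 197; 200; 205; 213; 215; 216; 217; 218; 219; 221; 222; 224; 226; 227; 228; 230; 231; 233; 250];
 [:: 0; 2; 10; 11; 12; 14; 17; 18; 19; 23; 30; 31; 33; 34; 35; 36; 39; 41; 42; 43; 45; 49; 51; 55; 56; 58; 59; 60; 63; 71; 77; 79; 84; 85; 87; 89; 91; 94; 95; 96; 97; 101; 103; 104; 105; 106; 108; 112; 115; 116; 119; 120; 122; 123; 125; 134; 136; 137; 138; 139; 143; 144; 145; 147; 148; 152; 154; 155; 156; 157; 158; 160; 162; 167; 170; 172; 173; 175; 176; 177; 178; 180; 182; 183; 184; 186; 187; 189; 190; 191; 192; 195; 196; 198; 199; 200; 202; 204; 205; 206; 213; 214; 215; 216; 217; 218; 221; 223; 225; 230; 233; 251];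
 [:: 0; 4; 7; 11; 12; 13; 14; 16; 20; 22; 23; 24; 32; 34; 37; 38; 39; 44; 45; 46; 50; 51; 52; 55; 56; 65; 69; 71; 72; 73; 75; 77; 78; 79; 80; 83; 84; 85; 86; 87; 88; 89; 90; 91; 92; 93; 96; 100; 101; 103; 104; 105; 106; 108; 109; 111; 114; 115; 118; 120; 121; 122; 123; 126; 129; 130; 133; 134; 135; 140; 141; 146; 147; 148; 150; 154; 155; 158; 160; 162; 163; 164; 166; 167; 173; 174; 175; 178; 185; 186; 187; 188; 191; 193; 195; 199; 201; 202; 203; 204; 207; 208; 209; 212; 214; 215; 219; 220; 224; 228; 233; 252];
 [:: 2; 3; 4; 6; 7; 9; 11; 13; 14; 15; 16; 18; 19; 22; 24; 26; 27; 28; 34; 36; 39; 40; 41; 42; 43; 45; 46; 49; 51; 59; 62; 63; 68; 69; 70; 71; 76; 78; 79; 80; 82; 84; 95; 98; 100; 101; 103; 108; 109; 112; 113; 123; 126; 127; 129; 133; 135; 136; 140; 142; 145; 146; 148; 149; 150; 152; 153; 154; 157; 158; 159; 161; 167; 169; 170; 177; 180; 182; 183; 187; 188; 189; 190; 193; 195; 197; 201; 203; 206; 207; 208; 212; 215; 218; 219; 220; 222; 223; 225; 227; 230; 236; 253];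
 [:: 2; 3; 4; 7; 9; 10; 11; 14; 16; 19; 20; 21; 22; 24; 25; 26; 27; 28; 30; 32; 34; 35; 42; 45; 48; 51; 52; 55; 56; 60; 62; 69; 70; 71; 73; 77; 80; 81; 82; 84; 85; 86; 91; 93; 95; 97; 98; 101; 103; 104; 106; 107; 109; 110; 111; 112; 115; 117; 118; 120; 123; 125; 126; 127; 128; 132; 134; 140; 146; 149; 151; 154; 155; 156; 157; 158; 160; 161; 162; 164; 167; 168; 169; 170; 173; 174; 176; 178; 180; 183; 184; 185; 187; 188; 191; 193; 195; 196; 198; 199; 201; 202; 205; 206; 208; 212; 213; 214; 215; 216; 217; 221; 222; 224; 225; 227; 230; 233; 254];
 [:: 2; 7; 13; 17; 19; 20; 22; 24; 25; 27; 28; 30; 34; 35; 36; 38; 40; 41; 43; 45; 46; 49; 50; 52; 59; 70; 76; 77; 79; 80; 81; 82; 84; 85; 86; 87; 92; 93; 97; 98; 100; 103; 105; 110; 111; 112; 113; 115; 118; 119; 125; 126; 127; 129; 131; 133; 134; 135; 137; 139; 140; 141; 142; 143; 144; 145; 147; 148; 149; 152; 153; 154; 155; 156; 160; 162; 163; 164; 165; 166; 169; 172; 176; 178; 180; 183; 184; 185; 186; 187; 189; 191; 197; 198; 199; 201; 205; 208; 209; 213; 216; 222; 223; 225; 226; 227; 228; 230; 231; 236; 255]].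
Definition wordN : seq N := [:: 0; 2; 3; 5; 7; 10; 12; 13; 16; 18; 19; 21; 22; 24; 30; 35; 37; 43; 44; 48; 49; 50; 55; 56; 61; 62; 67; 73; 76; 77; 81; 82; 83; 86; 89; 90; 91; 94; 95; 103; 105; 106; 107; 113; 114; 120; 123; 124; 125; 131; 133; 135; 137; 138; 140; 141; 146; 147; 148; 149; 152; 153; 154; 155; 157; 158; 159; 160; 161; 164; 166; 167; 170; 172; 173; 175; 176; 177; 178; 180; 182; 186; 187; 188; 189; 191; 192; 195; 198; 201; 204; 205; 206; 218; 220; 222; 228; 229; 230; 233; 236; 240; 241].
Definition nonpivN : seq N := [:: 0; 2; 3; 4; 5; 6; 7; 9; 10; 11; 12; 13; 14; 15; 16; 17; 18; 19; 20; 21; 22; 23; 24; 25; 26; 27; 28; 30; 31; 32; 33; 34; 35; 36; 37; 38; 39; 40; 41; 42; 43; 44; 45; 46; 48; 49; 50; 51; 52; 55; 56; 58; 59; 60; 61; 62; 63; 65; 66; 67; 68; 69; 70; 71; 72; 73; 75; 76; 77; 78; 79; 80; 81; 82; 83; 84; 85; 86; 87; 88; 89; 90; 91; 92; 93; 94; 95; 96; 97; 98; 100; 101; 103; 104; 105; 106; 107; 108; 109; 110; 111; 112; 113; 114; 115; 116; 117; 118; 119; 120; 121; 122; 123; 124; 125; 126; 127; 128; 129; 130; 131; 132; 133; 134; 135; 136; 137; 138; 139; 140; 141; 142; 143; 144; 145; 146; 147; 148; 149; 150; 151; 152; 153; 154; 155; 156; 157; 158; 159; 160; 161; 162; 163;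 164; 165; 166; 167; 168; 169; 170; 172; 173; 174; 175; 176; 177; 178; 180; 181; 182; 183; 184; 185; 186; 187; 188; 189; 190; 191; 192; 193; 195; 196; 197; 198; 199; 200; 201; 202; 203; 204; 205; 206; 207; 208; 209; 210; 212; 213; 214; 215; 216; 217; 218; 219; 220; 221; 222; 223; 224; 225; 226; 227; 228; 230; 231; 233; 236].
Definition masksN : seq N := [:: 12911249390434542980475926530581019346232887808046029646459497675652943625998848128883744476987747012814874586263099561641;
 10328999512347634371222240867194800392898972643871002307364179632054247597013299393502548523268892810283915304730674809057;
 592855496895062922435766858082309748302567420014757935829244593495937996648589626;
 25477096445662268129088034750541268579652772347012431452488316833451893449975309346611108638334806226470;
 12911249390434542980475926530581019346231553883178015758938540429489436947504215368661075170626438519820809078325114323954;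
 12911249390434542980475926530581019346231435312078636761792835234733106604586411170037657926432426904131816734366012839347;
 592855496895069135860975295771118327057661939927080213765227734392807475092902633;
 10004667708513875400158267715612887735016999442982416172079020403327;
 1422853192548166052441090709470044059381651770228774830533576407099937715696837263;
 12911249390434542980475926530581019346231553883178015763466968971244293954107605743017479829912823155530452653430276509596;
 1422853192548159839015882263017971722209622892956465044612340515814046382486441570;
 12911249390434542980475926530581019346231553883178015775051321054785300402629129117928691587634687275905767270061975750655;
 118571099379013258485820058026897874230058244539284749294289329829493393785865843;
 1541424291927177941867119082660174713934447988425438851186150838931039645432611205;
 2582249878086908613173238971779689042551600036344805551875302963949569037666693446413926016907493725240551759044677017236;
 1541424291927169306259202256543925374785476422105115004139089565340798497496384648;
 12911249390434542980475926530581019346232502451973047850578643031283798688891984885533728310719812722745430994220298102272;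
 12911249390434542980475926530581019346232502451973047850578643031292964344346644584763494895986753286839147103683222661134;
 12911249390434542980475926530581019346232028167575531808391865792962151556958900385984702148600359993653173344673727423660;
 12911249390434542980475926530581019346231435312078636750629732317868957802776258938048183328954835812159206219214259275167;
 948568795032111754750310498450230177567852758040513963506667507031965642527629340;
 12911249390434542980475926530581019346232502451973047857213317406411153216755160177886142226077585158590836049155369698932;
 12911249390434542980475926530581019346232028167575531805127184751239291178854819977868887878629070610970208933693036048554;
 12911249390434542980475926530581019346231909596476152809666476223169614809868309302425116970909871108624762935956909613694;
 12911249390434542980475926530581019346231435312078636766110639193152214921438582918791762169585577799843503688748711656967;
 1679808557024550601196805385594046793151024761363957202337270601216887172087103079443077684473440923090;
 1541424291927162250335660470997075671202498289721120087516115924354782035773884465;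
 11794976666885213464083302334001669129379953814699059313355920931788;
 118571099379034005007278767646220086321266764952672797986896601232071192796119664;
 10218835390390761496359033237776333947917604953387152055872978517798302545649996080997926776827350251089;
 1067139894411117114814255406297681558436310507966265245153182348841191301771595232;
 1067139894411111217325921970594171205415955080797065508858483269567017701898347418;
 12911249390434542980475926530581019346232028167575531803231563501200560003505539625537827535183327072140684371087599734423;
 12911249390434542980475926530581019346231909596476152793659007889535052422031379921820206826362881414817857830124536160964;
 12911249390434542961578080273605411332434596331474479485529091308848129018521946495114617048632667455098796399746571121777;
 592855496895080509588475497848485019481181002501563084061248845023501257132025278;
 12911249390434542980475926530581019346232383880873668837741406377917396715191572139022493042406724363450618787484107698292;
 474284397516059879242238659862592047354645314904707874361616548467878982421289152;
 118571099379031161575403716731975327803480659687966441024410537980829860934204289;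
 12911249390434542980475926530581019346232502451973047870482666156651261389117778456090987874263716244449655922800900213515;
 12911249390434542980475926530581019346232028167575531815869038501415922523577543377599721600493623818026486456796349114634;
 1067139894411118483874047089598107619033614507554133795908298960149367255944772321;
 1067139894411127646043422259126349369543983000096543126788413456931105865059921773;
 12911249390434542980475926530581019346232028167575531804811247876225478820543658260217318183805065089074091447777489643995;
 1067139894411132701033422361207466057502969323858255229913528312377278592091531388;
 12911249390434542980475926530581019346231435312078636744732243984418648524170185036237383796763133475629455637527163880757;
 12911249390434542980475926530581019346232028167575531811656546834680918342137933323754049228005808208159953075067231787973;
 12911249390434542952059165118665402296117218509392547297124878289761864137779844508546981506753166189300598425536353691406;
 948568795032099749149060283889199261507179234007497920617634785206707918688330241;
 118571099379025790648528631238595605526267604420655811021765464970702822749156445;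
 12911249390434542980475926530581019346231553883178015774946008763110370298669895230626372176744782653819374244179974600394;
 2582249878086908621712265797779953478784586905681256758590611606750318488880396561853515375509539168647902946691276059426;
 1422853192548144779358173665245066265224629437915586727024125932724751938872409258;
 12911249390434542980475926530581019346231909596476152812615220389880850872164728236153445359760343513471304553115860295142;
 1067139894411127540731130606080235854185803679165068510874693792650639021242241679;
 12911249390434542980475926530581019346232383880873668845850452836394985381098227007913806963637426483048615742045389695142;
 12911249390434542980475926530581019346232383880873668846061077419734922238532355885558661308154793283019333822781007713255;
 474284397516055666750571928836123262566457497198492471800091613214050789394403645;
 1067139894411118062624880417526952512319915448098624795648000170307360500000067735;
 948568795032116283178852259140673354487320790128111421455590519789776987368282969;
 12911249390434542980475926530581019346232502451973047864901114698212516101040472662589841372466354573780339931922753150194;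
 12911249390434542980475926530581019346232383880873668860594173669979901777085006517522692246345081231486163512767270672211;
 118571099379014100984153404022737860018298097732215591565580413834840507658696987;
 1067139894411110058890713615332400896647286118881327101813029852671348699455418211;
 118571099379014100984153412450052734154110534988714529505118389135320719104677376;
 12911249390434542980475926530581019346231553883178015758306666679482555829410153187575591226854727089673955775340615959521;
 5160302291779021889178334911002902311159110509900268915181450159803;
 12911249390434542980475926530581019346232858165271184902991575491662539353511773308958798778252529861289694708585915579952;
 2582249878086908606733972831304382622160875981639746395627512193609872768922804221678770909919959367193886010202147140545;
 1067139894411122485741130496354265379347596854620256254066179519392452087461991821;
 25169637708794215022618238327623404336494328113600533067757337687416;
 1067139894411120484807588814488013270152202027763914481819545376819166573340480755;
 12911249390434542980475926530581019346232858165271184892881595491484218595549269972273370172012014880781452007286682654060;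
 948568795032096800404893566800419619513674908350577205330542057613230311713286554;
 12911249390434542980475926530581019346231909596476152801136180598015810594367357441382951505393761843674898174822623030887;
 592855496895065976492225248236139438214235355182875404128435804795253232199175472;
 12911249390434542980475926530581019346232383880873668847008888044734551241184517511584435171520763063054170580898025627178;
 19272149375363944663422699750371873910169708303031533461964030115692;
 12911249390434542980475926530581019346232502451973047854369885531353399263694130945676874338422886098202534603628261500683;
 12911249390434542980475926530581019346232502451973047863005493448181675812942216763406284886554558115358131178992142669679;
 12911249390434542980475926530581019346232858165271184907098754866732611692196921507209793718856301901888203084593215784668;
 12911249390434542980475926530581019346232383880873668844165456169695899589592526370565266111054799852488390025194138746948;
 592855496895069241173266966596490962226864874331283820540514836448139032903179796;
 1541424291927163198146285477296885317557122979778709416900773682844983548174408560;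
 12911249390434542980475926530581019346231553883178015769680394179680758280016904671458242629488983399724172218204560917588;
 10328999512347634364223038551604797416766067875383053755404805408282544895616773030471012084932451250772625504912914746257;
 12911249390434542980475926530581019346232976736370563897609785686380350358640339076979460368928220045979047768482330720560;
 15586219166955459244858458646715261265557986868556986193496809633425;
 12911249390434542978936102024766468701292228428038373580181598131550346539411780092018941859717549290123579795201148089739;
 12911249390434542980475926530581019346231435312078636766742512943142961970296921095575865739426455745828485163620768216013;
 592855496895075875847642081543122952965681267532675034294291829510700102942790556;
 1541424291927164777830660501903258862088810160903538393915424892843988700378056790;
 12911249390434542980475926530581019346232383880873668837530781794582797087743172739750529687444373242282861328336828553074;
 474284397516069252036197160197733962948423230317283316655732741960141381504389478;
 12911249390434542980475926530581019346232028167575531804600623292874671959498355665386015833992448013114714666249244159336;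
 2582249878086908611073478275042766651369763708175623203681244214085419176489073591560532006604606826886310772776169713457;
 1422853192548168158686924097972360952294836935579785413450041690188165222104860478;
 2582249878086908606034052605338208422382952595346646100663032947300942252271892326338495980876662156683342479664744868661;
 474284397516072727341822224815657766598457374184537232669795584985402832346327584;
 12911249390434542980475926530581019346232028167575531826294955376603247766951536109927415125999898499237788567230680316002;
 12911249390434542980475926530581019346232858165271184889827539033079478593342316817112589283071281448929815301544685029090;
 592855496895065976492225240059033828334924402424940354952757648100446856323165401;
 948568795032112702560935522242715973499046763030507823273403550124796026947591953;
 10328999512347634377801491049199988968654258218338456090386159051693873733653896989117358946794174046871613766728237818403;
 592855496895075349286183756395908767016363121275818714284832555356947464807734982;
 14138388686561956046194240672263186962882176342622396190471194297245928278442390020919578057579063453625;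
 12911249390434542980475926530581019346232028167575531810182174751321120460317379548124529033608151897817723944709426172574;
 12911249390434542980475926530581019346232028167575531819344344126493766674883741792301293512891472103650769978344957259438;
 1541424291927154773162951987481158928415621263488112202519217654508443929999116496;
 1067139894411109216392380270462440840415258081201543091335478833781478982687426865;
 12911249390434542980475926530581019346232858165271184890775349658107296538205144467826115674969857480963028989100153322989;
 12911249390434542980475926530581019346232976736370563921620988186813948479270351987833802499826694148912797297738917462257;
 12911249390434542980475926530581019346232028167575531823030274334888666477930376761252429094062935925804586715177783059525;
 12911249390434542980475926530581019346232383880873668847324824919738578470780549687616387235740900152738293879126759329430;
 2582249878086908607153924972157531859616191471170956330947991952125221457973854288998356373140921007768305553477372838213;
 474284397516070199846822179423992154476460314052577235751596981226462828284139731;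
 9688730833509528247550387425379374442167956357879487475928657360828;
 2582249878086908619752489151242500064615573468010878588334942661157122324760439590895289135787348895226902887749341322940;
 12911249390434542980475926530581019346232028167575531801335942251167992021409236794007231609164331653843958967798269274588;
 12911249390434542980475926530581019346231909596476152811456785181533464169302168237454313208376725338778507090045112246026;
 6299282091905548283843673264943597941323611167845186859091703971523398366232535859398206875086770247956;
 592855496895073980226392056988666123858259292488362951897804984822714022970116349;
 592855496895085353953892260667037644345632962705488665209038714990340619599359212;
 12911249390434542980475926530581019346231909596476152815037403098265068757400452499706563216102945201337700287940692404054;
 12911249390434542980475926530581019346231909596476152810824911431515787310162621169607884330165703451504249531951771372093;
 474284397516063881109322059486043278556091372172407808453970470200142607814290298;
 12911249390434542980475926530581019346231909596476152792605884972853813810207723019823312639083710058000330349206494473110;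
 12911249390434542980475926530581019346232502451973047852263639697991283081831797886720220007014929985516927276963905233726;
 12911249390434542980475926530581019346231909596476152804084924764730024707182516342394937503695688134086480895742525572607;
 7793109583492518569863767203926590399604081424903245684667507834633;
 22257463383540171719408707264408228072336146379109896070254655978410481811776232850745681692000576318256;
 948568795032116915052602251332845353812232639477637788123230848484165700801208392;
 12911249390434542980475926530581019346231435312078636756211283776299588589459433947619739220610484922856197540189803348294;
 12911249390434542980475926530581019346232383880873668850694818253132348615833540381649764044756308313050855947263640665373;
 12911249390434542979496038207475288092547755594061969835259597918596746113499347051899964039496136560419006833341925372297;
 8846232500160965363671063893693516015622483949338109256630361285903;
 474284397516049874574530144988313503846232643844805014061380311077602011317661338;
 10328999512347634386760470018823781516584128527363383672330072294365871341562566343436588362899912772729159324913383263437;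
 12911249390434542980475926530581019346231909596476152805032735389741491989615076708423565276389258872525334455227580046618;
 474284397516048294890155109829192602763642030148391774297442258629235793129516120;
 12911249390434542955418782233822470537916056645092512393419066312780000307438404457034536908587922664950629614473696506596;
 948568795032105330700518710991622455392370968819370084028850866297718495423404087;
 12911249390434542980475926530581019346232976736370563920673177561786963746051519512489101634981036632904571515854085472071;
 17218037711782273766238355699715227490393709993002014828643995044448617576284340436941398432033109852557;
 12911249390434542980475926530581019346232028167575531810182174751320691161087636137273761411833198373189629740536465266834;
 12911249390434542980475926530581019346231553883178015778737251263178653556513640074871382038048264227167197070025654863763;
 1067139894411128172604880602878073178644968140476168337245173990114168540428668774;
 1422853192548146569667132035710619449830873570727599230968327224727636585946527145;
 10328999512347634378081459142428455848738052299849649121234914767101153547619059340654242447167889751443595322829196589455;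
 118571099379032635947487085223437715411820608237888928803402478274336600005398346;
 12911249390434542980475926530581019346232502451973047853948636364674916956503555818845205179520601675194485720448737526321;
 12911249390434542980475926530581019346232502451973047862478931989824613847558843937124071570573217030662694359665114967669;
 12911249390434542980475926530581019346231435312078636768111572734855930987049399013799739572113433662438795712969654701186;
 592855496895063027748058526235724323769636468713933815243635774966251642812116044;
 12911249390434542980475926530581019346232976736370563912142881936637617500751860193256643845713370711047799609991643029867;
 12911249390434542980475926530581019346232383880873668837214844919566682800367438486052121850022156270359804073985230165977;
 12911249390434542980475926530581019346232502451973047874905782406734366562718366656063314703593735142257864880891450325872;
 11584352083558793503006429072411469311079791938961718033053227437535;
 1541424291927171833754202301775425181440378163525231839696027198487401184617840172;
 12911249390434542980475926530581019346231435312078636763372519609769166401970572825200301299233097153169565988312309835632;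
 12911249390434542980475926530581019346232383880873668846587638878069770793862770474819122303603683552190334849924116607959;
 948568795032113755683852208463687472288251929950687774392856132828087056775992917;
 12911249390434542980475926530581019346232858165271184887826605491389701985512789137142552480936216470171274009283934619649;
 12911249390434542980475926530581019346231909596476152815458652264941941084764079331550843865964720935326572061011343606168;
 948568795032100275710518632506431409442170061159877594799215712657474911281883551;
 1067139894411110058890713603578626127449993562002308419254407042711708827548967536;
 1067139894411106794209671888857963087166066971606770486007345789837600032975736982;
 12911249390434542980475926530581019346231909596476152807138981223118717652129827041872500578130773736679549793651666218926;
 12911249390434542980475926530581019346231435312078636762003459818057377072154155913282742009645145084299297410193295652620;
 12911249390434542980475926530581019346232028167575531822082463709869444657146872354035378309035335373815314499771852165502;
 12911249390434542980475926530581019346231435312078636769059383359851090800213496076253211091513968768474083862151823407679;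
 1369059791703477481529975316188053347929803829336950863880351244053;
 592855496895075665223058747009689187091212005098347620086238384289487751436178198;
 12911249390434542980475926530581019346231553883178015774314135013105998433348364494879462257822633722674019690465453918506;
 12911249390434542980475926530581019346232976736370563898978845478051976038009662887374711730153209626772552455521737917165;
 12911249390434542979356054162947015299523398871348690215760641817492240952719027692794907483259733934665501706403590994293;
 2582249878086908607293909021868094795829226677103483574378568479715482404818392294103652518360692439053155956774186032510;
 118571099379019893160195185749635601957788834870057487224722921544480271184179587;
 12911249390434542980475926530581019346232502451973047862162995114829546831212583228710615607339820664247363736270174038609;
 1067139894411127856668005611398402318211465803638727810964577465113922087277720120;
 12911249390434542980475926530581019346232858165271184896146276533194234030495350942534492970977814805624985314902636591472;
 1422853192548151624657132120828844405033233009063306803137771177561210388737412797;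
 592855496895071452731392012545555659542646627781471477288501774819544888195766897;
 10328999512347634361563341667367876894176844188747875097601134377817143811501791896957404017919912048725208543222759505659;
 2582249878086908623112106261347778266834669568189469159156096563649909791258554364891145003229404051555482456603916976894;
 592855496895064712744725214412859352383884716081105391851018264701816580683928435;
 12911249390434542980475926530581019346232976736370563920989114436780523017135549024721566600722112020060890251804531591598;
 23379328750428032831786449339519402066117316081626796572784991756464;
 592855496895062922435766866533771889395449284918099161052035237390980468391931904;
 2582249878086908598754882194987820872431639205127647711215071750993278162909362958420909570031544089149516374856044835768;
 2582249878086908591475711776782531087975012978177462181764873059258701943672814180768433463589299236895027987467850324377;
 12911249390434542980475926530581019346231553883178015754515424179401474063348926214069691177369324369104631026110109270976;
 1422853192548165315255049031347688555205631402811829136082679160076230684802462644;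
 8530295625167065637858100967251903235089726598071395596448919285438;
 592855496895072821791183713804967028002507964242475942278839767606565775123424573;
 1067139894411126698232797242162558808540138507717777901323296721041974935208214588;
 1067139894411128488541755622132047866886937033359170106829086690666530444674900815;
 12911249390434542983415591510588657982086662553051134316652469567460437698285338332335294115904200676673325746916459858353;
 12911249390434542980475926530581019346232028167575531815026540168082238507435242131496613532961053215264261386743577581314;
 592855496895069241173266974236516306653154459315487790346828026536496008853559045;
 12911249390434542980475926530581019346232858165271184896146276533213695189660552639614615877665120612959058901713479802885;
 2659696886583650121600631124610815069677351063675565660677296588534019565478639857140189046946012840730;
 12911249390434542980475926530581019346232028167575531816606224543111762026630564861404337497747276709515758227363548820593;
 12911249390434542980475926530581019346231553883178015778737251263182056761192073467346977900476750826679252727880126790894;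
 12911249390434542980475926530581019346231909596476152816090526014960054177213883836532979007688105655534923152357895257814;
 15902156041974028401320298624883066640866832954727964897521540505309;
 12911249390434542980475926530581019346232502451973047871219852198313644973221488011530620289272942038009457248084900209657;
 12911249390434542980475926530581019346232858165271184892144409449802991165301783703730351050194956039033431715796202296028;
 1541424291927164777830660503315104483735899304115158009130223587429725660191935723;
 12911249390434542980475926530581019346232858165271184897304711741558015676151889787111029372843819399852069563206531707114;
 1422853192548141514677131949867857630897218114474154040942628975704251524309432523;
 12911249390434542980475926530581019346231553883178015776315068554803117638956401680036821445295657161113950138231886155652;
 12911249390434542980475926530581019346232383880873668861120735128319345583202652312685433739894324668318507766062896899355;
 3639585212427154247565730095992722158086532942990231615289067112614586974434081413081988961879823065654;
 12911249390434542980475926530581019346232383880873668846587638878075870758146242610921814248682145181918179277065295500818;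
 12911249390434542980475926530581019346232976736370563920041303811769312818408827194521690943006117466463042423568304164208;
 12911249390434542980475926530581019346231435312078636763477831901422277722245258322850425145745831867016014650379706648263;
 948568795032104066953018706482939809235581607105580213905193848215153362495260646].

Local Close Scope N_scope.

Definition piv : seq byte := map byte_of_N pivN.
Definition basis : seq (seq byte) := map (map byte_of_N) basisN.
Definition word : seq byte := map byte_of_N wordN.
Definition nonpiv : seq byte := map byte_of_N nonpivN.
Definition mask_of_N (n : N) : seq byte :=
  [seq byte_of_N (N.shiftr n (N.of_nat (8 * k))) | k <- iota 0 102].
Definition masks : seq (seq byte) := map mask_of_N masksN.
Definition maskOf (a : byte) : seq byte := nth [::] masks (index a nonpiv).

Definition check_inv := all (fun x => (x == bzero) || (gmul x (ginv x) == bone)) all_bytes.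
Definition check_A := size Aseq == 239.
Definition check_basis := all (fun V => synd [seq b <- Aseq | b \in V] == zv) basis.
Definition check_word := (synd [seq b <- Aseq | b \in word] == zv) && (count (mem word) Aseq == 103).
Definition check_masks_gen (xs : seq byte) (tab : seq (byte * seq byte)) :=
  all (fun a => all (fun bv => dotl (maskOf a) bv.2 == (a == bv.1)) tab) xs.
Definition check_masks := check_masks_gen nonpiv [seq (b, colvec b) | b <- nonpiv].
Definition check_piv :=
  [&& size piv == 21, size basis == 21, all (fun p => p \in Aseq) piv &
   all (fun j => all (fun j' => (nth bzero piv j' \in nth [::] basis j) == (j == j'))
      (iota 0 21)) (iota 0 21)].
Definition check_nonpiv := all (fun b => (b \in piv) || (b \in nonpiv)) Aseq.
Definition check_masksz := all (fun a => size (maskOf a) == 102) nonpiv.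

Lemma mem_all_bytes x : x \in all_bytes.
Proof.
case: x => [[[[[[[a0 a1] a2] a3] a4] a5] a6] a7].
by case: a0; case: a1; case: a2; case: a3; case: a4; case: a5; case: a6; case: a7; vm_compute.
Qed.

Lemma uniq_all_bytes : uniq all_bytes.
Proof. by vm_compute. Qed.
Lemma check_inv_ok : check_inv. Proof. by vm_compute. Qed.
Lemma check_A_ok : check_A. Proof. by vm_compute. Qed.
Definition inV (V : seq byte) (b : byte) : bool := b \in V.
Definition inW (b : byte) : bool := b \in word.
Definition Vj (j : nat) : seq byte := nth [::] basis j.
Definition pj (j : nat) : byte := nth bzero piv j.

Lemma piv_size : size piv = 21%N. Proof. by vm_compute. Qed.
Lemma basis_size : size basis = 21%N. Proof. by vm_compute. Qed.
Lemma piv_in : all (fun j => pj j \in Aseq) (iota 0 21). Proof. by vm_compute. Qed.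
Lemma piv_basis : all (fun j => all (fun j' => inV (Vj j) (pj j') == (j == j'))
      (iota 0 21)) (iota 0 21).
Proof. by vm_compute. Qed.
Lemma nonpiv_all : all (fun b => (b \in piv) || (b \in nonpiv)) Aseq. Proof. by vm_compute. Qed.
Lemma masksz_all : all (fun a => size (maskOf a) == 102%N) nonpiv. Proof. by vm_compute. Qed.

Lemma nth_traj (T : Type) (f : T -> T) (x y : T) (m i : nat) : (i < m)%N ->
  nth y (traject f x m) i = iter i f x.
Proof. by move=> hi; rewrite (set_nth_default x) ?size_traject // nth_traject. Qed.

Lemma nth_colvec b k : (k < 102)%N -> nth bzero (colvec b) k = colb k b.
Proof.
move=> hk; rewrite /colvec; cbv beta zeta; rewrite (nth_map 0%N) ?size_iota // nth_iota // add0n.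
rewrite /colb /qb /geval /ginv /gpow.
rewrite !nth_traj //; try lia.

Qed.

Lemma size_colvec b : size (colvec b) = 102%N.
Proof. by rewrite /colvec size_map size_iota. Qed.

Lemma size_vxor u v : size (vxor u v) = minn (size u) (size v).
Proof. by rewrite /vxor size_map size_zip. Qed.

Lemma size_synd s : size (synd s) = 102%N.
Proof. by elim: s => [|b s IH] //=; rewrite size_vxor size_colvec IH. Qed.

Lemma nth_vxor u v k : size u = size v -> (k < size u)%N ->
  nth bzero (vxor u v) k = bxor (nth bzero u k) (nth bzero v k).
Proof.
move=> e hk; rewrite /vxor (nth_map (bzero, bzero)) ?size_zip ?e ?minnn -?e //.
by rewrite nth_zip.
Qed.

Lemma band_xor m u v : band m (bxor u v) = bxor (band m u) (band m v).
Proof.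
case: m => [[[[[[[m0 m1] m2] m3] m4] m5] m6] m7].
case: u => [[[[[[[a0 a1] a2] a3] a4] a5] a6] a7].
case: v => [[[[[[[c0 c1] c2] c3] c4] c5] c6] c7].
by rewrite /band /bxor !andb_addr.
Qed.

Lemma bpar_xor u v : bpar (bxor u v) = bpar u (+) bpar v.
Proof.
case: u => [[[[[[[a0 a1] a2] a3] a4] a5] a6] a7].
case: v => [[[[[[[c0 c1] c2] c3] c4] c5] c6] c7].
rewrite /bpar /bxor.
by case: a0; case: a1; case: a2; case: a3; case: a4; case: a5; case: a6; case: a7;
  rewrite /= ?addNb ?addbN ?negbK.
Qed.

Lemma band0 m : band m bzero = bzero.
Proof. by case: m => [[[[[[[m0 m1] m2] m3] m4] m5] m6] m7]; rewrite /band /= !andbF. Qed.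

Lemma basis_all : all (fun V => synd [seq b <- Aseq | inV V b] == zv) basis.
Proof. by vm_compute. Qed.
Lemma word_synd : synd [seq b <- Aseq | inW b] == zv.
Proof. by vm_compute. Qed.
Lemma word_count : count inW Aseq = 103%N.
Proof. by vm_compute. Qed.
Lemma masks_ok : check_masks_gen nonpiv [seq (b, colvec b) | b <- nonpiv].
Proof. by vm_compute. Qed.

Import GRing.Theory.
Local Open Scope ring_scope.

Section Phi.
Variables (F : fieldType) (r : F).
Hypothesis two : 2%:R = 0 :> F.
Hypothesis hr : r ^+ 8 + r ^+ 4 + r ^+ 3 + r + 1 = 0.

Definition phi (x : byte) : F :=
  let: (a0,a1,a2,a3,a4,a5,a6,a7) := x in
  a0%:R + a1%:R * r + a2%:R * r ^+ 2 + a3%:R * r ^+ 3 + a4%:R * r ^+ 4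
  + a5%:R * r ^+ 5 + a6%:R * r ^+ 6 + a7%:R * r ^+ 7.

Lemma addbR (a b : bool) : ((a (+) b : bool) : nat)%:R = a%:R + b%:R :> F.
Proof. by case: a; case: b; rewrite /= ?addr0 ?add0r // -natrD two. Qed.

Lemma addX0 (z w : F) : w = 0 -> z = z + w.
Proof. by move->; rewrite addr0. Qed.

Lemma phi0 : phi bzero = 0.
Proof. by rewrite /phi /=; ring. Qed.

Lemma phi1 : phi bone = 1.
Proof. by rewrite /phi /=; ring. Qed.

Lemma phi_xor x y : phi (bxor x y) = phi x + phi y.
Proof.
case: x => [[[[[[[a0 a1] a2] a3] a4] a5] a6] a7].
case: y => [[[[[[[c0 c1] c2] c3] c4] c5] c6] c7].
rewrite /phi /= !addbR; ring.
Qed.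

Lemma phi_xtime x : phi (xtime x) = r * phi x.
Proof.
case: x => [[[[[[[a0 a1] a2] a3] a4] a5] a6] a7].
rewrite /phi /= !addbR.
rewrite [LHS](@addX0 _ (a7%:R * (r ^+ 8 + r ^+ 4 + r ^+ 3 + r + 1)
   - 2%:R * a7%:R * (1 + r + r ^+ 3 + r ^+ 4))); last by rewrite hr two; ring.
ring.
Qed.

Lemma phi_if (b : bool) x : phi (if b then x else bzero) = b%:R * phi x.
Proof. by case: b; rewrite ?phi0 /=; ring. Qed.

Lemma phi_hstep x b acc : phi (hstep x b acc) = r * phi acc + b%:R * phi x.
Proof. by rewrite /hstep phi_xor phi_xtime phi_if. Qed.

Lemma phi_gmul x y : phi (gmul x y) = phi x * phi y.
Proof.
case: y => [[[[[[[b0 b1] b2] b3] b4] b5] b6] b7].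
rewrite /gmul !phi_hstep phi0 /phi; ring.
Qed.

Lemma phi_gpow x n : phi (gpow x n) = phi x ^+ n.
Proof.
elim: n => [|n IH]; first by rewrite phi1.
by rewrite /gpow iterS -/(gpow x n) phi_gmul IH exprS.
Qed.

End Phi.


Section Root.
Variable F : finFieldType.
Hypothesis hF : #|F| = 256%N.

Lemma two_F : 2%:R = 0 :> F.
Proof.
have := @card_finPcharP F 2 8 hF isT.
by move/pcharf0.
Qed.

Let pp : {poly F} := 'X^8 + ('X^4 + ('X^3 + ('X + 1))).

Lemma sqstep (A B s s' q e : {poly F}) : pp %| A - s ->
  B = A ^+ 2 -> s ^+ 2 - s' = pp * q + 2%:R * e -> pp %| B - s'.
Proof.
move=> H -> E.
have -> : A ^+ 2 - s' = (A - s) * (A + s) + (s ^+ 2 - s') by ring.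
rewrite E -polyC_natr two_F polyC0 mul0r addr0.
by rewrite dvdp_add // ?dvdp_mulr // dvdp_mulIl.
Qed.

Lemma pp_dvd : pp %| 'X^256 - 'X.
Proof.
have S0 : pp %| 'X^1 - 'X by rewrite expr1 subrr dvdp0.
have S1 : pp %| 'X^2 - ('X^2).
  apply: (sqstep (q:=0) (e:=0) S0); [by rewrite -exprM | rewrite /pp; ring].

have S2 : pp %| 'X^4 - ('X^4).
  apply: (sqstep (q:=0) (e:=0) S1); [by rewrite -exprM | rewrite /pp; ring].

have S3 : pp %| 'X^8 - ('X^4 + 'X^3 + 'X + 1).
  apply: (sqstep (q:=(1)) (e:=(- 'X^4 + - 'X^3 + - 'X + - 1)) S2); [by rewrite -exprM | rewrite /pp; ring].

have S4 : pp %| 'X^16 - ('X^6 + 'X^4 + 'X^3 + 'X^2 + 'X).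
  apply: (sqstep (q:=(1)) (e:=('X^7 + 'X^5 + 'X^4)) S3); [by rewrite -exprM | rewrite /pp; ring].

have S5 : pp %| 'X^32 - ('X^7 + 'X^6 + 'X^5 + 'X^2).
  apply: (sqstep (q:=('X^4)) (e:=('X^10 + 'X^9 + 'X^8 + 'X^7 + 'X^6 + 'X^5 + 'X^4 + 'X^3)) S4); [by rewrite -exprM | rewrite /pp; ring].

have S6 : pp %| 'X^64 - ('X^6 + 'X^3 + 'X^2 + 1).
  apply: (sqstep (q:=('X^6 + 'X^4 + 'X + 1)) (e:=('X^13 + 'X^12 + 'X^11 + - 'X^6 + - 'X^5 + - 'X^4 + - 'X^3 + - 'X^2 + - 'X + - 1)) S5); [by rewrite -exprM | rewrite /pp; ring].

have S7 : pp %| 'X^128 - ('X^7 + 'X^6 + 'X^5 + 'X^4 + 'X^3 + 'X).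
  apply: (sqstep (q:=('X^4 + 1)) (e:=('X^9 + - 'X^7 + 'X^6 + - 'X^4 + 'X^2 + - 'X)) S6); [by rewrite -exprM | rewrite /pp; ring].

have S8 : pp %| 'X^256 - ('X).
  apply: (sqstep (q:=('X^6 + 'X^4 + 'X)) (e:=('X^13 + 'X^12 + 2%:R * 'X^11 + 2%:R * 'X^10 + 'X^9 + 2%:R * 'X^8 + 'X^7 + 'X^6 + - 'X)) S7); [by rewrite -exprM | rewrite /pp; ring].

exact: S8.
Qed.

Lemma size_XnD n (q : {poly F}) : (size q <= n)%N -> size ('X^n + q) = n.+1.
Proof. by move=> h; rewrite size_polyDl size_polyXn // ltnS. Qed.

Lemma size_pp : size pp = 9%N.
Proof. by rewrite /pp !size_XnD // ?size_XaddC. Qed.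

Lemma exists_root : exists r : F, r ^+ 8 + r ^+ 4 + r ^+ 3 + r + 1 = 0.
Proof.
have := pp_dvd; rewrite -hF finField_genPoly.
case/dvdp_prod_XsubC => m.
case: (mask m _) => [|x s] /=.
  rewrite big_nil => /eqp_size; by rewrite size_pp size_poly1.
rewrite big_cons => Hx.
exists x.
have : root pp x.
  rewrite root_factor_theorem (eqp_dvdr _ Hx).
  exact: dvdp_mulIl.
rewrite /root /pp !hornerE => /eqP H; exact: H.
Qed.

End Root.


Section Goppa.
Variable F : fieldType.
Hypothesis two : 2%:R = 0 :> F.

Definition gp : {poly F} := ('X^17 + 1) ^+ 6.

Lemma two_poly : 2%:R = 0 :> {poly F}.
Proof. by rewrite -polyC_natr two polyC0. Qed.

Lemma gE : gp = 'X^102 + ('X^68 + ('X^34 + 1)).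
Proof.
rewrite /gp.
have -> : ('X^17 + 1 : {poly F}) ^+ 6 = 'X^102 + ('X^68 + ('X^34 + 1)) +
   2%:R * (3%:R * 'X^85 + 7%:R * 'X^68 + 10%:R * 'X^51 + 7%:R * 'X^34 + 3%:R * 'X^17)
  by ring.
by rewrite two_poly mul0r addr0.
Qed.

Lemma size_XnD' n (q : {poly F}) : (size q <= n)%N -> size ('X^n + q) = n.+1.
Proof. by move=> h; rewrite size_polyDl size_polyXn // ltnS. Qed.

Lemma size_g : size gp = 103%N.
Proof. by rewrite gE !size_XnD' // size_poly1. Qed.

Lemma horner_g a : gp.[a] = a ^+ 102 + (a ^+ 68 + (a ^+ 34 + 1)).
Proof. by rewrite gE !hornerD !hornerXn hornerC. Qed.

Definition qc (k : nat) (a : F) : F :=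
  a ^+ (101 - k) + (if (k < 68)%N then a ^+ (67 - k) else 0)
  + (if (k < 34)%N then a ^+ (33 - k) else 0).

Definition Sn n (a : F) : {poly F} := \sum_(t < n) 'X^(n.-1 - t) * (a ^+ t)%:P.

Lemma Sn_spec n a : 'X^n - (a ^+ n)%:P = ('X - a%:P) * Sn n a.
Proof.
rewrite polyC_exp subrXX /Sn; congr (_ * _).
by apply: eq_bigr => t _; rewrite polyC_exp.
Qed.

Lemma Sn_coef n a k : (Sn n a)`_k = if (k < n)%N then a ^+ (n.-1 - k) else 0.
Proof.
rewrite /Sn coef_sum.
under eq_bigr => t _ do rewrite coefMC coefXn.
case: ltnP => hk.
  have hk' : (n.-1 - k < n)%N by lia.
  rewrite (bigD1 (Ordinal hk')) //= big1 ?addr0.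
    have -> : (k == n.-1 - (n.-1 - k))%N by apply/eqP; lia.
    by rewrite mul1r.
  move=> t /eqP ht; have -> : (k == n.-1 - t)%N = false; last by rewrite mul0r.
  apply/eqP => E; apply: ht; apply: val_inj => /=; have := ltn_ord t; lia.
rewrite big1 // => t _.
have -> : (k == n.-1 - t)%N = false; last by rewrite mul0r.
by apply/eqP => E; have := ltn_ord t; lia.
Qed.

Definition Q (a : F) : {poly F} := Sn 102 a + Sn 68 a + Sn 34 a.

Lemma Q_spec a : ('X - a%:P) * Q a = gp - (gp.[a])%:P.
Proof.
rewrite /Q !mulrDr -!Sn_spec horner_g gE !polyCD polyC1; ring.
Qed.

Lemma Q_coef a k : (Q a)`_k = if (k < 102)%N then qc k a else 0.
Proof.
rewrite /Q !coefD !Sn_coef /qc.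
have [h1|h1] := ltnP k 34; have [h2|h2] := ltnP k 68; have [h3|h3] := ltnP k 102;
  rewrite /= ?addr0 ?add0r //; lia.
Qed.

Definition hh (a : F) : {poly F} := \poly_(k < 102) (- (qc k a / gp.[a])).

Lemma hhE a : hh a = - (Q a * ((gp.[a])^-1)%:P).
Proof.
apply/polyP => k; rewrite coef_poly coefN coefMC Q_coef.
by case: ifP => _; rewrite ?mul0r ?oppr0.
Qed.

Lemma hh_inv a : gp.[a] != 0 -> inv_mod gp a (hh a).
Proof.
move=> ga; rewrite /inv_mod hhE mulrN mulrA Q_spec.
have -> : - ((gp - (gp.[a])%:P) * ((gp.[a])^-1)%:P) = 1 - gp * ((gp.[a])^-1)%:P.
  by rewrite mulrBl -polyCM mulfV // polyC1 opprB.
by rewrite modpD modpN mulrC modp_mull oppr0 addr0 modp_small // size_poly1 size_g.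
Qed.

Lemma inv_unique a h h' : gp.[a] != 0 -> inv_mod gp a h -> inv_mod gp a h' ->
  gp %| h - h'.
Proof.
move=> ga H H'.
have cop : coprimep gp ('X - a%:P) by rewrite coprimep_XsubC /root.
rewrite -(Gauss_dvdpr _ cop); apply/modp_eq0P.
by rewrite mulrBr modpD modpN H H' subrr.
Qed.

Lemma size_hh a : (size (hh a) <= 102)%N.
Proof. exact: size_poly. Qed.

End Goppa.


Lemma bxorK x y : bxor (bxor x y) y = x.
Proof.
case: x => [[[[[[[a0 a1] a2] a3] a4] a5] a6] a7].
case: y => [[[[[[[c0 c1] c2] c3] c4] c5] c6] c7].
by rewrite /bxor /= !addbK.
Qed.

Lemma bxor0 y : bxor bzero y = y.
Proof. by case: y => [[[[[[[c0 c1] c2] c3] c4] c5] c6] c7]. Qed.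

Lemma card_byte : #|{: byte}| = 256%N.
Proof. by rewrite !card_prod card_bool. Qed.

Section Inj.
Variables (F : fieldType) (r : F).
Hypothesis two : 2%:R = 0 :> F.
Hypothesis hr : r ^+ 8 + r ^+ 4 + r ^+ 3 + r + 1 = 0.
Local Notation ph := (phi r).

Lemma phi_inv x : x != bzero -> ph x * ph (ginv x) = 1.
Proof.
move=> hx; rewrite -phi_gmul //; move/allP: check_inv_ok => /(_ x (mem_all_bytes x)).
case/orP => [/eqP E|/eqP ->]; first by rewrite E eqxx in hx.
by rewrite phi1.
Qed.

Lemma phi_neq0 x : x != bzero -> ph x != 0.
Proof. by move=> hx; apply/eqP => E; have := phi_inv hx; rewrite E mul0r => /eqP; rewrite eq_sym oner_eq0. Qed.

Lemma phi_injective : injective ph.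
Proof.
move=> x y E.
have H : ph (bxor x y) = 0 by rewrite phi_xor // E -mulr2n -mulr_natl two mul0r.
have hz : bxor x y = bzero.
  apply/eqP; apply: contraLR (eqxx (0 : F)); rewrite -{1}H => hb.
  exact: phi_neq0 hb.
by rewrite -(bxorK x y) hz bxor0.
Qed.

End Inj.

Section Main.
Variables (F : fieldType) (r : F).
Hypothesis two : 2%:R = 0 :> F.
Hypothesis hr : r ^+ 8 + r ^+ 4 + r ^+ 3 + r + 1 = 0.
Variable psi : F -> byte.
Hypothesis phiK : cancel (phi r) psi.
Hypothesis psiK : cancel psi (phi r).
Variables (n : nat) (L : 'I_n -> F).
Hypothesis hLinj : injective L.
Hypothesis hLim : forall a : F, (exists i, L i = a) <-> (gp F).[a] != 0.

Local Notation ph := (phi r).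
Local Notation g := (gp F).

Lemma phi_inj : injective ph.
Proof. exact: can_inj phiK. Qed.

Lemma phi_eq0 x : (ph x == 0) = (x == bzero).
Proof.
apply/eqP/eqP => [E|->]; last exact: phi0.
by apply: phi_inj; rewrite E phi0.
Qed.

Lemma psi0 : psi 0 = bzero.
Proof. by rewrite -(phi0 r) phiK. Qed.

Lemma psiD x y : psi (x + y) = bxor (psi x) (psi y).
Proof. by apply: phi_inj; rewrite phi_xor // !psiK. Qed.

Lemma phi_ginv x : x != bzero -> ph (ginv x) = (ph x)^-1.
Proof.
move=> hx; apply: (mulfI (phi_neq0 two hr hx)); rewrite phi_inv // mulfV //; exact: phi_neq0.
Qed.

Lemma phi_geval b : ph (geval b) = g.[ph b].
Proof. by rewrite /geval !phi_xor // !phi_gpow // phi1 horner_g. Qed.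

Lemma phi_qb k b : ph (qb k b) = qc k (ph b).
Proof.
rewrite /qb /qc !phi_xor // !phi_gpow //.
by case: ifP => _; case: ifP => _; rewrite ?phi_gpow ?phi0 ?addrA.
Qed.

Lemma phi_colb k b : geval b != bzero -> ph (colb k b) = qc k (ph b) / g.[ph b].
Proof.
by move=> hb; rewrite /colb phi_gmul // phi_ginv // phi_qb phi_geval.
Qed.

Definition bi (i : 'I_n) : byte := psi (L i).
Definition Ab (b : byte) : bool := geval b != bzero.

Lemma phi_bi i : ph (bi i) = L i.
Proof. exact: psiK. Qed.

Lemma A_bi i : Ab (bi i).
Proof.
have /hLim : exists j, L j = L i by exists i.
by rewrite -phi_bi -phi_geval phi_eq0.
Qed.

Lemma bi_surj b : Ab b -> exists i, bi i = b.
Proof.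
rewrite /Ab -phi_eq0 phi_geval => /hLim [i Hi].
by exists i; rewrite /bi Hi phiK.
Qed.

Lemma bi_inj : injective bi.
Proof. by move=> i j E; apply: hLinj; rewrite -!phi_bi E. Qed.

Lemma perm_all_bytes : perm_eq (index_enum byte) all_bytes.
Proof.
apply: uniq_perm; [exact: index_enum_uniq | exact: uniq_all_bytes|].
by move=> x; rewrite mem_index_enum mem_all_bytes.
Qed.

Lemma sum_bi (R : Type) (idx : R) (op : Monoid.com_law idx) (Y : byte -> R) :
  \big[op/idx]_(i < n) Y (bi i) = \big[op/idx]_(b <- Aseq) Y b.
Proof.
rewrite (partition_big (P := predT) bi Ab); last by move=> i _; exact: A_bi.
rewrite /Aseq big_filter -(perm_big _ perm_all_bytes).
apply: eq_bigr => b Hb.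
have [i0 Hi0] := bi_surj Hb.
rewrite (big_pred1 i0) ?Hi0 // => i /=.
apply/eqP/eqP => [E|->//]; apply: bi_inj; by rewrite E.
Qed.

Lemma n_eq : n = 239%N.
Proof.
have E := @sum_bi nat 0%N addn (fun _ => 1%N).
rewrite [X in _ = X]sum1_size sum1_card card_ord in E.
by rewrite E; apply/eqP; exact: check_A_ok.
Qed.

Definition chi (x : 'F_2) : F := (x : nat)%:R.

Lemma one_one : 1 + 1 = 0 :> F.
Proof. by rewrite -mulr2n two. Qed.

Lemma F2_cases (x : 'F_2) : x = 0 \/ x = 1.
Proof.
case: x => [[|[|m]] hm]; [left; exact: val_inj | right; exact: val_inj | by []].
Qed.

Lemma chi0 : chi 0 = 0. Proof. by []. Qed.
Lemma chi1 : chi 1 = 1. Proof. by []. Qed.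

Lemma chiD x y : chi (x + y) = chi x + chi y.
Proof.
case: (F2_cases x) => ->; case: (F2_cases y) => ->;
  rewrite ?addr0 ?add0r ?chi0 ?chi1 ?addr0 ?add0r //; rewrite ?one_one.
Qed.

Lemma chiN x : chi (- x) = - chi x.
Proof.
case: (F2_cases x) => ->; first by rewrite oppr0 chi0 oppr0.
apply/eqP; rewrite -addr_eq0; apply/eqP.
rewrite (_ : - 1 = 1 :> 'F_2) ?chi1 ?one_one //; exact: val_inj.
Qed.

Lemma chiM x y : chi (x * y) = chi x * chi y.
Proof.
by case: (F2_cases x) => ->; case: (F2_cases y) => ->;
  rewrite ?mulr0 ?mul0r ?mulr1 ?mul1r ?chi0 ?chi1 ?mulr0 ?mul0r ?mulr1.
Qed.

Lemma chi_sum (I : Type) (s : seq I) (P : pred I) (f : I -> 'F_2) :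
  chi (\sum_(i <- s | P i) f i) = \sum_(i <- s | P i) chi (f i).
Proof. exact: (big_morph chi chiD chi0). Qed.

Lemma chi_bool (b : bool) : chi (b%:R) = b%:R.
Proof. by case: b. Qed.

Definition syn (k : nat) (c : 'rV['F_2]_n) : F :=
  \sum_i chi (c 0 i) * ph (colb k (bi i)).
Definition codeF (c : 'rV['F_2]_n) := forall k, (k < 102)%N -> syn k c = 0.

Lemma gL i : g.[L i] != 0.
Proof. by apply/hLim; exists i. Qed.

Lemma goppa_iff c : in_goppa L g c <-> codeF c.
Proof.
set S := \sum_(i < n) chi (c 0 i) *: hh (L i).
have val i : inv_mod g (L i) (hh (L i)) := hh_inv two (gL i).
have E1 : in_goppa L g c <-> g %| S.
  split => [H|H h Hh]; first exact: H.
  have -> : \sum_(i < n) ((c 0 i : nat)%:R : F) *: h i =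
            S + \sum_(i < n) chi (c 0 i) *: (h i - hh (L i)).
    rewrite /S -big_split; apply: eq_bigr => i _.
    by rewrite /= -scalerDr addrC subrK.
  rewrite dvdp_add //.
  apply: (big_ind (fun p => g %| p)) => //; first by move=> p q hp hq; rewrite dvdp_add.
  move=> i _; rewrite -mul_polyC dvdp_mull //; exact: inv_unique (gL i) (Hh i) (val i).
have szS : (size S <= 102)%N.
  apply: (big_ind (fun p : {poly F} => size p <= 102)%N) => //.
    by rewrite size_poly0.
    by move=> p q hp hq; rewrite (leq_trans (size_polyD _ _)) // geq_max hp hq.
  by move=> i _; apply: leq_trans (size_scale_leq _ _) (size_poly _ _).
have E2 : g %| S <-> S = 0.
  split => [H|->]; last exact: dvdp0.
  apply/eqP; apply: contraTT H => HS; apply/negP => D.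
  have := dvdp_leq HS D; rewrite (size_g two) => /leq_trans /(_ szS).
  by [].
have E3 : S = 0 <-> forall k, (k < 102)%N -> S`_k = 0.
  split => [-> k _|H]; first by rewrite coef0.
  apply/polyP => k; rewrite coef0; case: (ltnP k 102) => hk; first exact: H.
  by apply: nth_default; exact: leq_trans szS hk.
have E4 k : (k < 102)%N -> S`_k = - syn k c.
  move=> hk; rewrite /S coef_sum /syn -sumrN; apply: eq_bigr => i _.
  rewrite coefZ coef_poly hk (phi_colb _ (A_bi i)) phi_bi mulrN //.
rewrite E1 E2 E3; split => H k hk.
  by apply/eqP; rewrite -oppr_eq0 -E4 // H.
by rewrite E4 // (H k hk) oppr0.
Qed.

Lemma synB k c d : syn k (c - d) = syn k c - syn k d.
Proof.
rewrite /syn -sumrB; apply: eq_bigr => i _.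
by rewrite !mxE chiD chiN mulrBl.
Qed.

Lemma syn_mul k (D : 'M['F_2]_(1, 21)) (G : 'M['F_2]_(21, n)) :
  syn k (D *m G) = \sum_j chi (D 0 j) * (\sum_i chi (G j i) * ph (colb k (bi i))).
Proof.
rewrite /syn.
under eq_bigr => i _ do rewrite mxE chi_sum mulr_suml.
rewrite exchange_big; apply: eq_bigr => j _; rewrite mulr_sumr.
by apply: eq_bigr => i _; rewrite chiM mulrA.
Qed.

Lemma sum_synd (s : seq byte) (f : byte -> bool) k : (k < 102)%N ->
  \sum_(b <- s) ((f b : nat)%:R : F) * ph (colb k b) =
  ph (nth bzero (synd [seq b <- s | f b]) k).
Proof.
move=> hk; elim: s => [|b s IH].
  by rewrite big_nil (_ : synd [seq x <- [::] | f x] = zv) // nth_nseq hk phi0.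
rewrite big_cons IH.
have -> : [seq x <- b :: s | f x] = if f b then b :: [seq x <- s | f x]
                                    else [seq x <- s | f x] by [].
case: (f b); last by rewrite mul0r add0r.
rewrite mul1r (_ : synd (b :: [seq x <- s | f x]) =
                   vxor (colvec b) (synd [seq x <- s | f x])) //.
rewrite nth_vxor ?size_colvec ?size_synd // phi_xor // nth_colvec //.
Qed.

Lemma synf_zero (f : byte -> bool) k : synd [seq b <- Aseq | f b] == zv ->
  (k < 102)%N -> \sum_i chi ((f (bi i))%:R) * ph (colb k (bi i)) = 0.
Proof.
move=> /eqP H hk.
under eq_bigr => i _ do rewrite chi_bool.
rewrite (@sum_bi F 0 +%R (fun b => ((f b : nat)%:R : F) * ph (colb k b))).
by rewrite sum_synd // H nth_nseq hk phi0.
Qed.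

Lemma addbF2 (a b : bool) : ((a (+) b : bool) : nat)%:R = a%:R + b%:R :> 'F_2.
Proof. by case: a; case: b; apply/val_inj. Qed.

Lemma dotl_sum (m v : seq byte) : size m = size v ->
  ((dotl m v : nat)%:R : 'F_2) =
  \sum_(k < size m) ((bpar (band (nth bzero m k) (nth bzero v k))) : nat)%:R.
Proof.
elim: m v => [|x m IH] [|y v] //= e.
  by rewrite big_ord0.
rewrite big_ord_recl -IH; last by case: e.
by rewrite /dotl /= addbF2.
Qed.

Definition ell (m : byte) (x : F) : 'F_2 := (bpar (band m (psi x)) : nat)%:R.

Lemma ellD m x y : ell m (x + y) = ell m x + ell m y.
Proof. by rewrite /ell psiD band_xor bpar_xor addbF2. Qed.

Lemma ell0 m : ell m 0 = 0.
Proof. by rewrite /ell psi0 band0. Qed.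

Lemma ell_sum m (e : 'I_n -> 'F_2) (Y : 'I_n -> F) :
  ell m (\sum_i chi (e i) * Y i) = \sum_i e i * ell m (Y i).
Proof.
rewrite (big_morph (ell m) (ellD m) (ell0 m)); apply: eq_bigr => i _.
case: (F2_cases (e i)) => ->; first by rewrite chi0 mul0r ell0 mul0r.
by rewrite chi1 !mul1r.
Qed.

Lemma sum_pick (R : ringType) (p : byte) (i0 : 'I_n) (Z : 'I_n -> R) :
  bi i0 = p -> \sum_i ((bi i == p) : nat)%:R * Z i = Z i0.
Proof.
move=> h; rewrite (bigD1 i0) //= h eqxx mul1r big1 ?addr0 // => i hi.
by rewrite -h (inj_eq bi_inj) (negbTE hi) mul0r.
Qed.

Lemma in_Aseq i : bi i \in Aseq.
Proof. rewrite /Aseq mem_filter mem_all_bytes andbT; exact: A_bi. Qed.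

Lemma nonpiv_of i : bi i \notin piv -> bi i \in nonpiv.
Proof.
move=> hp; have := allP nonpiv_all _ (in_Aseq i).
by case/orP => // h; rewrite h in hp.
Qed.

Lemma kernel_piv (e : 'rV['F_2]_n) : codeF e ->
  (forall i, bi i \in piv -> e 0 i = 0) -> e = 0.
Proof.
move=> He Hp; apply/rowP => i0; rewrite [RHS]mxE.
case: (boolP (bi i0 \in piv)) => hp; first exact: Hp.
have han := nonpiv_of hp.
set a := bi i0 in han *.
set M := maskOf a.
have hM : size M = 102%N by apply/eqP; exact: (allP masksz_all _ han).
have H1 : forall k : 'I_102,
    \sum_i e 0 i * ((bpar (band (nth bzero M k) (colb k (bi i)))) : nat)%:R = 0.
  move=> k; have := He k (ltn_ord k).
  move/(congr1 (ell (nth bzero M k))); rewrite ell0 /syn ell_sum => H.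
  rewrite -[RHS]H; by apply: eq_bigr => i _; rewrite /ell phiK.
have H2 : \sum_i e 0 i * ((dotl M (colvec (bi i))) : nat)%:R = 0.
  have -> : \sum_i e 0 i * ((dotl M (colvec (bi i))) : nat)%:R =
      \sum_(k < 102) \sum_i e 0 i * ((bpar (band (nth bzero M k) (colb k (bi i)))) : nat)%:R.
    rewrite exchange_big; apply: eq_bigr => i _.
    rewrite dotl_sum ?size_colvec // mulr_sumr.
    move: (M) hM => M' hM'; rewrite hM'.
    by apply: eq_bigr => k _; rewrite nth_colvec.
  by rewrite big1.
have H3 : \sum_i e 0 i * ((dotl M (colvec (bi i))) : nat)%:R =
          \sum_i ((bi i == a) : nat)%:R * e 0 i.
  apply: eq_bigr => i _.
  case: (boolP (bi i \in piv)) => hpi; first by rewrite Hp // mul0r mulr0.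
  have hbn := nonpiv_of hpi.
  have := masks_ok; rewrite /check_masks_gen => /allP /(_ a han) /allP.
  move=> /(_ (bi i, colvec (bi i)) (map_f (fun b => (b, colvec b)) hbn)).
  move/eqP => ->; by rewrite eq_sym mulrC.
by rewrite -(sum_pick _ (erefl a)) -H3.
Qed.

Definition Gm : 'M['F_2]_(21, n) := \matrix_(j, i) ((inV (Vj j) (bi i)) : nat)%:R.
Definition Bm : 'M['F_2]_(n, 21) := \matrix_(i, j) ((bi i == pj j) : nat)%:R.

Lemma piv_facts : [/\ size piv = 21%N, size basis = 21%N,
  forall j, (j < 21)%N -> pj j \in Aseq &
  forall j j', (j < 21)%N -> (j' < 21)%N -> inV (Vj j) (pj j') = (j == j')].
Proof.
have h3 := allP piv_in; have h4 := allP piv_basis.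
split => //; try exact: piv_size; try exact: basis_size.
  by move=> j hj; apply: h3; rewrite mem_iota add0n hj.
move=> j j' hj hj'; have := h4 j; rewrite mem_iota add0n => /(_ hj) /allP /(_ j').
by rewrite mem_iota add0n => /(_ hj') /eqP.
Qed.

Lemma pj_surj j : (j < 21)%N -> exists i, bi i = pj j.
Proof.
case: piv_facts => _ _ h3 _ hj; apply: bi_surj.
by have := h3 j hj; rewrite /Aseq mem_filter => /andP [].
Qed.

Lemma Gm_free : row_free Gm.
Proof.
case: piv_facts => _ _ _ h4.
apply/row_freeP; exists Bm; apply/matrixP => j j'.
rewrite !mxE.
have [i0 hi0] := pj_surj (ltn_ord j').
under eq_bigr => i _ do rewrite !mxE mulrC.
by rewrite (sum_pick _ hi0) hi0 h4.
Qed.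

Lemma codeF_mul D : codeF (D *m Gm).
Proof.
case: piv_facts => _ h2 _ _.
move=> k hk; rewrite syn_mul big1 // => j _.
under eq_bigr => i _ do rewrite mxE.
rewrite (synf_zero (f := inV (Vj j))) ?mulr0 //.
apply: (allP basis_all); rewrite mem_nth // h2 //.
Qed.

Lemma sub_Gm c : codeF c <-> (c <= Gm)%MS.
Proof.
case: piv_facts => h1 _ _ h4.
split; last by case/submxP => D ->; exact: codeF_mul.
move=> Hc; apply/submxP; exists (c *m Bm).
set e := c - (c *m Bm) *m Gm.
have He : codeF e by move=> k hk; rewrite synB Hc // codeF_mul // subr0.
have Hp : forall i, bi i \in piv -> e 0 i = 0.
  move=> i hi.
  have hj : (index (bi i) piv < 21)%N by rewrite -h1 index_mem.
  have hpj : pj (index (bi i) piv) = bi i by rewrite /pj nth_index.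
  rewrite !mxE.
  rewrite (bigD1 (Ordinal hj)) //= big1.
    rewrite mxE.
    under eq_bigr => i' _ do rewrite mxE mulrC.
    have hv : inV (Vj (index (bi i) piv)) (bi i) = true.
      by rewrite -[X in inV _ X]hpj (h4 _ _ hj hj) eqxx.
    by rewrite (sum_pick _ (esym hpj)) mxE hv mulr1 addr0 subrr.
  move=> j hj'; rewrite [Gm _ _]mxE -{1}hpj (h4 _ _ (ltn_ord j) hj).
  rewrite (_ : (j == index (bi i) piv :> nat) = false) ?mulr0 //.
  by apply/negbTE; move: hj'; apply: contra => /eqP E; apply/eqP/val_inj.
have := kernel_piv He Hp.
by move/eqP; rewrite subr_eq0 => /eqP.
Qed.

Definition cW : 'rV['F_2]_n := \row_i ((inW (bi i)) : nat)%:R.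

Lemma cW_code : codeF cW.
Proof.
move=> k hk; rewrite /syn; under eq_bigr => i _ do rewrite mxE.
exact: (synf_zero (f := inW) word_synd hk).
Qed.

Lemma sum_count (s : seq byte) (P : pred byte) : \sum_(b <- s) (P b : nat) = count P s.
Proof. by elim: s => [|x s IH]; rewrite ?big_nil ?big_cons ?IH. Qed.

Lemma cW_weight : hweight cW = 103%N.
Proof.
rewrite /hweight.
have -> : #|[set i | cW 0 i != 0]| = \sum_i ((inW (bi i)) : nat).
  rewrite -sum1_card big_mkcond /=; apply: eq_bigr => i _.
  by rewrite inE mxE; case: (inW (bi i)).
rewrite (@sum_bi nat 0%N addn (fun b => ((inW b) : nat))) sum_count.
exact: word_count.
Qed.

Lemma cW_neq0 : cW != 0.
Proof.
apply/eqP => E; have := cW_weight; rewrite E /hweight.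
have -> : [set i | (0 : 'rV['F_2]_n) 0 i != 0] = set0.
  by apply/setP => i; rewrite !inE mxE eqxx.
by rewrite cards0.
Qed.

Lemma goppa_bound c : codeF c -> c != 0 -> (103 <= hweight c)%N.
Proof.
move=> Hc hc0.
pose y i := chi (c 0 i) / g.[L i].
have Hq : forall k, (k < 102)%N -> \sum_i y i * qc k (L i) = 0.
  move=> k hk; rewrite -[RHS](Hc k hk) /syn; apply: eq_bigr => i _.
  by rewrite (phi_colb _ (A_bi i)) phi_bi /y mulrAC -mulrA.
have Hm : forall m, (m < 102)%N -> \sum_i y i * (L i) ^+ m = 0.
  elim/ltn_ind => m IH hm.
  have E j : (j < m)%N -> \sum_i y i * (L i) ^+ j = 0.
    by move=> h; apply: IH h (ltn_trans h hm).
  have hk : (101 - m < 102)%N by rewrite ltnS leq_subr.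
  have := Hq _ hk; rewrite /qc (_ : (101 - (101 - m) = m)%N); last lia.
  case: (ltnP (101 - m) 68) => h68; case: (ltnP (101 - m) 34) => h34 /=.
  - rewrite (_ : (67 - (101 - m) = m - 34)%N); last lia.
    rewrite (_ : (33 - (101 - m) = m - 68)%N); last lia.
    under eq_bigr => i _ do rewrite !mulrDr.
    by rewrite !big_split /= (E (m - 34)%N) ?(E (m - 68)%N) ?addr0 //; lia.
  - rewrite (_ : (67 - (101 - m) = m - 34)%N); last lia.
    under eq_bigr => i _ do rewrite addr0 !mulrDr.
    by rewrite !big_split /= (E (m - 34)%N) ?addr0 //; lia.
  - by exfalso; lia.
  - by under eq_bigr => i _ do rewrite !addr0.
have [i0 hi0] : exists i0, c 0 i0 != 0.
  case: (pickP (fun i => c 0 i != 0)) => [i0 h|H]; first by exists i0.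
  case/negP: hc0; apply/eqP/rowP => i; rewrite mxE.
  by apply/eqP; move: (H i) => /negbFE.
have ci0 : c 0 i0 = 1 by case: (F2_cases (c 0 i0)) hi0 => ->.
rewrite leqNgt; apply/negP => hw.
pose S := [set i | c 0 i != 0].
pose Q := [predD1 S & i0].
pose P := \prod_(j in Q) ('X - (L j)%:P).
have szP : (size P <= 102)%N.
  rewrite /P -big_enum size_prod_XsubC -cardE.
  have := cardD1 i0 S; rewrite inE hi0 /= add1n => hS.
  by move: hw; rewrite /hweight -/S hS.
have key : \sum_i y i * P.[L i] = 0.
  under eq_bigr => i _ do rewrite (horner_coef_wide _ szP) mulr_sumr.
  rewrite exchange_big big1 // => m _.
  under eq_bigr => i _ do rewrite mulrCA.
  by rewrite -mulr_sumr Hm // mulr0.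
have : \sum_i y i * P.[L i] = y i0 * P.[L i0].
  rewrite (bigD1 i0) //= big1 ?addr0 // => i hi.
  case: (boolP (c 0 i != 0)) => hci.
    have iQ : i \in Q by rewrite !inE hi hci.
    by rewrite /P horner_prod (bigD1 i) //= hornerXsubC subrr mul0r mulr0.
  by move/negPn: hci => /eqP hci; rewrite /y hci chi0 !mul0r.
rewrite key => /esym /eqP; rewrite mulf_eq0 => /orP [].
  by rewrite /y ci0 chi1 mul1r invr_eq0 (negbTE (gL i0)).
rewrite /P horner_prod; apply/negP; apply/prodf_neq0 => j hj.
rewrite hornerXsubC subr_eq0 (inj_eq hLinj) eq_sym.
by move: hj; rewrite !inE => /andP [].
Qed.

Lemma main_sec : n = 239%N /\ is_nkd_code 21 103 (fun c => in_goppa L g c).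
Proof.
split; first exact: n_eq.
split; last split.
- exists Gm; split; first exact: Gm_free.
  by move=> c; rewrite goppa_iff; exact: sub_Gm.
- exists cW; split; first by apply/goppa_iff; exact: cW_code.
  by split; [exact: cW_neq0 | exact: cW_weight].
- by move=> c /goppa_iff Hc hc; exact: goppa_bound.
Qed.

End Main.


Unset Implicit Arguments. Set Strict Implicit. Set Printing Implicit Defensive.

Theorem mainTheorem1 (F : finFieldType) (hF : #|F| = 256%N)
  (n : nat) (L : 'I_n -> F) (hLinj : injective L)
  (hLim : forall a : F, (exists i, L i = a) <-> (('X^17 + 1) ^+ 6 : {poly F}).[a] != 0) :
  n = 239%N /\ @is_nkd_code n 21%N 103%N (fun c => in_goppa L (('X^17 + 1) ^+ 6) c) .
Proof.
have two := two_F hF.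
have [r hr] := exists_root hF.
have inj : injective (phi r) := phi_injective two hr.
have bij : bijective (phi r).
  apply: (@inj_card_bij byte F (phi r) inj).
  by rewrite hF card_byte.
have [psi phiK psiK] := bij.
exact: (main_sec two hr phiK psiK hLinj hLim).
Qed.
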